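(* Let $F$ be a forest and $t$ a positive constant. Then there exists a matching $M$ of $F$ such that the threshold assignment $\tau$ defined by $\tau(w)=deg_F(w)$ if $w$ is saturated by $M$ and $\tau(w)=0$ otherwise satisfies $\overline{\tau}\le t$ and $Ldyn_t(F)=dyn_\tau(F)=|M|$.
   Context: A threshold assignment is a function $\tau:V(F)\to\{0,1,2,\dots\}$ with $\tau(v)\le deg_F(v)$ for every $v$; $\overline{\tau}=\sum_v\tau(v)/|V(F)|$. A set $D\subseteq V(F)$ is a $\tau$-dynamo if $V(F)$ can be partitioned into $D_0=D,D_1,\dots,D_k$ such that for each $1\le i\le k$, $D_i$ consists of all vertices not in $D_0\cup\dots\cup D_{i-1}$ having at least $\tau(v)$ neighbors in $D_0\cup\dots\cup D_{i-1}$; $dyn_\tau(F)$ is the minimum size of a $\tau$-dynamo. $Ldyn_t(F)=\max\{dyn_\tau(F):\overline{\tau}\le t\}$. *)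

(* Defs.v *)
From HB Require Import structures.
From mathcomp Require Import all_boot all_order all_algebra.
From mathcomp Require Import reals.
Set Implicit Arguments. Unset Strict Implicit. Unset Printing Implicit Defensive.
Import Order.TTheory GRing.Theory Num.Theory.

Section Graphs.
Variable T : finType.
Variable e : rel T.

Definition simple_graph : Prop := symmetric e /\ irreflexive e.

Definition forest : Prop :=
  forall s : seq T, uniq s -> 3 <= size s -> ~~ cycle e s.

Definition nbhd (v : T) : {set T} := [set u | e v u].
Definition deg (v : T) : nat := #|nbhd v|.

Definition is_edge (A : {set T}) : bool :=
  [exists u, exists v, e u v && (A == [set u; v])].

Definition matching (M : {set {set T}}) : bool :=
  [forall A in M, is_edge A] &&
  [forall A in M, forall B in M, (A != B) ==> [disjoint A & B]].

Definition saturated (M : {set {set T}}) (w : T) : bool :=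
  [exists A in M, w \in A].

Definition threshold (tau : T -> nat) : bool := [forall v, tau v <= deg v].

Definition avg_threshold (R : realType) (tau : T -> nat) : R :=
  (\sum_(v : T) tau v)%:R / #|T|%:R.

(* cumulative sets D_0 u ... u D_i of the activation process from D *)
Fixpoint activated (tau : T -> nat) (D : {set T}) (i : nat) : {set T} :=
  match i with
  | 0 => D
  | i'.+1 => let C := activated tau D i' in
             C :|: [set v | (v \notin C) && (tau v <= #|nbhd v :&: C|)]
  end.

(* D is a tau-dynamo: the process D_0 = D, D_1, ... covers V.  The process
   only grows and stabilizes within |V| steps, so k ranges over 0..|V|. *)
Definition dynamo (tau : T -> nat) (D : {set T}) : bool :=
  [exists k : 'I_#|T|.+1, activated tau D k == [set: T]].

(* dyn_tau(F): minimum size of a tau-dynamo (V itself is one) *)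
Definition dyn (tau : T -> nat) : nat :=
  \big[minn/#|T|]_(D : {set T} | dynamo tau D) #|D|.

(* Ldyn_t(F) = max { dyn_tau(F) : tau threshold assignment, avg tau <= t }.
   In a simple graph any threshold assignment has values <= deg v < |V|,
   so it is encoded as a finite function into 'I_|V|. *)
Definition Ldyn (R : realType) (t : R) : nat :=
  \max_(s : {ffun T -> 'I_#|T|} |
          threshold (fun v => nat_of_ord (s v)) &&
          (avg_threshold R (fun v => nat_of_ord (s v)) <= t)%R)
     dyn (fun v => nat_of_ord (s v)).

End Graphs.

(* Main.v *)
Require Import Defs.
From HB Require Import structures.
From mathcomp Require Import all_boot all_order all_algebra.
From mathcomp Require Import reals.
Import Order.TTheory GRing.Theory Num.Theory.
From mathcomp Require Import zify.
From Stdlib Require Import FunctionalExtensionality.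

Module Aux.
Set Implicit Arguments. Unset Strict Implicit. Unset Printing Implicit Defensive.

Section G.
Variables (T : finType) (e : rel T).
Hypothesis esym : symmetric e.
Hypothesis eirr : irreflexive e.
Hypothesis efor : forest e.

Definition degS (S : {set T}) v := #|nbhd e v :&: S|.

Lemma size_leS (S : {set T}) s : uniq s -> all (fun z => z \in S) s -> size s <= #|S|.
Proof.
move=> Us As; rewrite cardE; apply: uniq_leq_size => // z zs.
by rewrite mem_enum; move/allP: As; apply.
Qed.

Lemma leaf (S : {set T}) x : x \in S -> exists2 v, v \in S & degS S v <= 1.
Proof.
move=> xS; case: (boolP [exists v in S, degS S v <= 1]) => [/exists_inP[v vS dv]|/exists_inPn H2].
  by exists v.
have {}H2 : forall v, v \in S -> 1 < degS S v by move=> v /H2; rewrite -ltnNge.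
pose good (s : seq T) := [&& uniq s, all (fun z => z \in S) s &
   if s is y :: p then path e y p else false].
suff: forall n s, #|S| - size s < n -> good s -> False.
  move/(_ (#|S|.+1) [:: x]) => H; exfalso; apply: H; last by rewrite /good /= xS.
  by rewrite ltnS leq_subr.
elim=> // n IH [//|y p] Hn /and3P[Us As Ps].
have yS : y \in S by move: As => /= /andP[].
have Hin : forall z, z \in nbhd e y :&: S -> z \in p.
  move=> z; rewrite !inE => /andP[eyz zS].
  case: (boolP (z \in y :: p)) => [|zn].
    rewrite inE => /orP[/eqP zy|//]; by rewrite zy eirr in eyz.
  exfalso; apply: (IH (z :: y :: p)).
    have : size (z :: y :: p) <= #|S|.
      by apply: size_leS; rewrite /= ?zn ?Us ?zS //.
    move: Hn => /=; lia.
  apply/and3P; split; first by rewrite cons_uniq zn Us.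
    by apply/allP => w; rewrite inE => /orP[/eqP->|]; [| apply: (allP As)].
  by rewrite /= esym eyz Ps.
have [a [b [aN bN ab]]] := card_gt1P (H2 y yS).
have pa := Hin a aN; have pb := Hin b bN.
have iab : index a p != index b p.
  apply: contra ab => /eqP h.
  by rewrite -(nth_index y pa) h nth_index.
pose c := if index a p < index b p then b else a.
have cp : c \in p by rewrite /c; case: ifP.
have ic : 0 < index c p by rewrite /c; case: ifP => h; lia.
have ecy : e c y.
  have : c \in nbhd e y :&: S by rewrite /c; case: ifP.
  by rewrite !inE esym => /andP[].
set i := index c p.
have ip : i < size p by rewrite index_mem.
have pt : path e y (take i.+1 p).
  by move: Ps; rewrite -{1}(cat_take_drop i.+1 p) cat_path => /andP[].
apply: (negP (efor (s := y :: take i.+1 p) _ _)).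
- by have := take_uniq i.+2 Us.
- by rewrite /= size_takel //; lia.
- rewrite /cycle rcons_path pt /= (take_nth y ip) last_rcons nth_index //.
Qed.

Definition pre (s : seq T) v := [set u | index u s < index v s].
Definition cost (M : {set {set T}}) (S : {set T}) :=
  \sum_(w in S) (if saturated M w then degS S w else 0).

Lemma degSD1 S v w : degS S w = (e w v && (v \in S)) + degS (S :\ v) w.
Proof. by rewrite /degS (cardsD1 v) setIDA !inE. Qed.

Lemma index_cons (s : seq T) v u : index u (v :: s) = if v == u then 0 else (index u s).+1.
Proof. by []. Qed.

Lemma card_pre_cons s v w : w != v ->
  #|nbhd e w :&: pre s w| <= #|nbhd e w :&: pre (v :: s) w|.
Proof.
move=> wv; apply: subset_leq_card; apply/subsetP => u; rewrite !inE => /andP[-> h].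
rewrite !index_cons (eq_sym v w) (negbTE wv); case: (v == u) => //.
Qed.

Lemma card_pre_cons1 s v w : w != v -> v \notin s -> e w v ->
  #|nbhd e w :&: pre s w| < #|nbhd e w :&: pre (v :: s) w|.
Proof.
move=> wv vs ewv.
have vn : v \notin nbhd e w :&: pre s w.
  rewrite !inE negb_and; apply/orP; right; rewrite -leqNgt.
  by rewrite (memNindex vs) index_size.
have sub : v |: (nbhd e w :&: pre s w) \subset nbhd e w :&: pre (v :: s) w.
  apply/subsetP => u; rewrite !inE => /orP[/eqP->|/andP[-> h]].
    by rewrite ewv !index_cons eqxx (eq_sym v w) (negbTE wv).
  rewrite !index_cons (eq_sym v w) (negbTE wv); by case: (v == u).
by move: (subset_leq_card sub); rewrite cardsU1 vn.
Qed.

Lemma card_pre_rcons s v w : w \in s ->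
  #|nbhd e w :&: pre s w| <= #|nbhd e w :&: pre (rcons s v) w|.
Proof.
move=> ws; apply: subset_leq_card; apply/subsetP => u; rewrite !inE => /andP[-> h] /=.
have us : u \in s by rewrite -index_mem (ltn_trans h) // index_mem.
by rewrite -!cats1 !index_cat ws us.
Qed.

Lemma card_pre_rcons_v s v u : v \notin s -> u \in s -> e v u ->
  0 < #|nbhd e v :&: pre (rcons s v) v|.
Proof.
move=> vs us evu; apply/card_gt0P; exists u; rewrite !inE evu /=.
by rewrite -!cats1 !index_cat us (negbTE vs) /= eqxx addn0 index_mem.
Qed.

Lemma matching0 : matching e set0.
Proof. by apply/andP; split; apply/forall_inP => A; rewrite inE. Qed.

Lemma matching_edge (M : {set {set T}}) A : matching e M -> A \in M -> is_edge e A.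
Proof. by move=> /andP[/forall_inP H _]; apply: H. Qed.

Lemma matching_disj (M : {set {set T}}) A B : matching e M -> A \in M -> B \in M -> A != B ->
  [disjoint A & B].
Proof.
by move=> /andP[_ /forall_inP H] AM BM AB; move/forall_inP: (H A AM) => /(_ B BM) /implyP; apply.
Qed.

Lemma sat0 w : saturated (T:=T) set0 w = false.
Proof. by apply/exists_inP => -[A]; rewrite inE. Qed.

Lemma satU (M : {set {set T}}) (u v w : T) : saturated ([set u; v] |: M) w = [|| w == u, w == v | saturated M w].
Proof.
apply/exists_inP/idP.
  move=> [A]; rewrite !inE => /orP[/eqP->|AM]; first by rewrite !inE => /orP[->|->]; rewrite ?orbT.
  by move=> wA; rewrite orbA orbC; apply/orP; left; apply/exists_inP; exists A.
move=> /orP[wu|/orP[wv|/exists_inP[A AM wA]]].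
- by exists [set u; v]; rewrite !inE ?eqxx ?wu.
- by exists [set u; v]; rewrite !inE ?eqxx ?wv ?orbT.
- by exists A; rewrite // !inE AM orbT.
Qed.

Lemma matchingU (M : {set {set T}}) u v : matching e M -> e u v -> ~~ saturated M u -> ~~ saturated M v ->
  matching e ([set u; v] |: M).
Proof.
move=> mM euv su sv; apply/andP; split.
  apply/forall_inP => A; rewrite !inE => /orP[/eqP->|AM]; last exact: matching_edge AM.
  by apply/existsP; exists u; apply/existsP; exists v; rewrite euv eqxx.
have dj : forall B, B \in M -> [disjoint [set u; v] & B].
  move=> B BM; rewrite -setI_eq0; apply/eqP/setP => x; rewrite !inE.
  apply/negP => /andP[/orP[/eqP xu|/eqP xv] xB].
    by move/negP: su; apply; apply/exists_inP; exists B; rewrite // -xu.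
  by move/negP: sv; apply; apply/exists_inP; exists B; rewrite // -xv.
apply/forall_inP => A; rewrite !inE => AM; apply/forall_inP => B; rewrite !inE => BM.
case/orP: AM => [/eqP->|AM]; case/orP: BM => [/eqP->|BM]; apply/implyP => AB.
- by rewrite eqxx in AB.
- exact: dj.
- by rewrite disjoint_sym; apply: dj.
- exact: matching_disj AM BM AB.
Qed.

Lemma arB0 (b : bool) d tu X Y : (b -> 0 < tu.-1) -> (if b then d else 0) + X <= tu.-1 + Y ->
  0 + ((if b then d.+1 else 0) + X) <= 0 + (tu + Y).
Proof. by case: b => [/(_ isT)|_]; lia. Qed.
Lemma arB1 (b : bool) d tu X Y : (if b then d else 0) + X <= tu + Y ->
  0 + ((if b then d.+1 else 0) + X) <= 1 + (tu + Y).
Proof. case: b; lia. Qed.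
Lemma arO x a b : x.-1 <= a -> a < b -> x <= b. Proof. lia. Qed.

Lemma sumD1 (A : {set T}) a (F : T -> nat) : a \in A ->
  \sum_(i in A) F i = F a + \sum_(i in A :\ a) F i.
Proof. by move=> aA; rewrite (big_setD1 a aA). Qed.

Lemma core (S : {set T}) (tau : T -> nat) :
  (forall v, v \in S -> tau v <= degS S v) ->
  exists (s : seq T) (D : {set T}) (M : {set {set T}}), [/\ uniq s, (forall x, (x \in s) = (x \in S)), D \subset S,
      #|D| <= #|M| & matching e M] /\
   [/\ (forall w, saturated M w -> (w \in S) && (0 < tau w)),
      cost M S <= \sum_(w in S) tau w &
      (forall v, v \in S -> v \notin D -> tau v <= #|nbhd e v :&: pre s v|)].
Proof.
have [n] := ubnP #|S|; elim: n S tau => // n IH S tau leS Ht.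
case: (set_0Vmem S) => [->|[x xS]].
  exists [::], set0, set0; split; split => //; try exact: matching0.
  all: try by move=> w; rewrite ?sat0 ?inE.
  all: try by rewrite cards0.
  by rewrite /cost big1 // => w; rewrite inE.
have [v vS dv] := leaf xS.
set S' := S :\ v.
have ltS' : #|S'| < n by move: leS; rewrite (cardsD1 v S) vS.
have vS' : v \notin S' by rewrite !inE eqxx.
have inS' : forall w, (w \in S') = (w != v) && (w \in S) by move=> w; rewrite !inE.
have [d0|d1] : degS S v = 0 \/ degS S v = 1 by lia.
-
  have ev : forall w, w \in S -> e w v = false.
    move=> w wS; apply/negP => ewv.
    have : w \in nbhd e v :&: S by rewrite !inE esym ewv.
    by rewrite (cards0_eq d0) inE.
  have dS : forall w, w \in S -> degS S w = degS S' w by move=> w wS; rewrite (degSD1 S v) ev.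
  have tv : tau v = 0 by move: (Ht v vS); rewrite d0; lia.
  have Ht' : forall w, w \in S' -> tau w <= degS S' w.
    by move=> w; rewrite inS' => /andP[_ wS]; rewrite -dS //; apply: Ht.
  have [s [D [M [[Us Ms DS cD mM] [satM cM oM]]]]] := IH S' tau ltS' Ht'.
  exists (v :: s), D, M; split; split; try exact: cD; try exact: mM.
  + by rewrite /= Us Ms vS'.
  + move=> y; rewrite in_cons Ms inS'; case: eqVneq => [->|] //=.
  + by apply: subset_trans DS _; apply: subsetDl.
  + move=> w sw; move: (satM w sw) => /andP[]; rewrite inS' => /andP[_ wS] tw; by rewrite wS tw.
  + rewrite /cost (sumD1 _ vS) (sumD1 _ vS) /= tv.
    have -> : saturated M v = false by apply/negbTE/negP => sv; move: (satM v sv); rewrite (negbTE vS').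
    rewrite !add0n; apply: leq_trans cM; rewrite leq_eqVlt; apply/orP; left; apply/eqP.
    by apply: eq_bigr => w; rewrite inS' => /andP[_ wS]; rewrite dS.
  + move=> w wS wD; case: (eqVneq w v) => [->|wv]; first by rewrite tv.
    apply: leq_trans (card_pre_cons _ wv); apply: oM => //; by rewrite inS' wv.
-
  have [u Hu] : exists u, nbhd e v :&: S = [set u] by apply/cards1P; rewrite -/(degS S v) d1.
  have : u \in nbhd e v :&: S by rewrite Hu set11.
  rewrite !inE => /andP[evu uS].
  have uv : u != v by apply: contraTneq evu => ->; rewrite eirr.
  have uS' : u \in S' by rewrite inS' uv.
  have only : forall w, w \in S -> e w v -> w = u.
    move=> w wS ewv; have : w \in nbhd e v :&: S by rewrite !inE esym ewv.
    by rewrite Hu inE => /eqP.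
  have dSw : forall w, w \in S' -> w != u -> degS S w = degS S' w.
    move=> w; rewrite inS' => /andP[_ wS] wu; rewrite (degSD1 S v).
    case: (boolP (e w v)) => [ewv|] //=; by rewrite (only w wS ewv) eqxx in wu.
  have dSu : degS S u = (degS S' u).+1 by rewrite (degSD1 S v) esym evu vS.
  have tv1 : tau v <= 1 by rewrite -d1; apply: Ht.
  have sum2 : forall f : T -> nat, \sum_(w in S) f w = f v + (f u + \sum_(w in S' :\ u) f w).
    by move=> f; rewrite (sumD1 _ vS) (sumD1 _ uS').
  have inS'' : forall w, w \in S' :\ u -> [/\ w != u, w != v & w \in S].
    by move=> w; rewrite !inE => /and3P[a b c]; split.
  have [tv0|tv1'] : tau v = 0 \/ tau v = 1 by lia.
  + (* tau v = 0 : v helps u *)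
    pose tau' := fun w => if w == u then (tau u).-1 else tau w.
    have Ht' : forall w, w \in S' -> tau' w <= degS S' w.
      move=> w wS'; rewrite /tau'; case: eqVneq => [->|wu].
        by have := Ht u uS; rewrite dSu; lia.
      by rewrite -dSw //; apply: Ht; move: wS'; rewrite inS' => /andP[].
    have [s [D [M [[Us Ms DS cD mM] [satM cM oM]]]]] := IH S' tau' ltS' Ht'.
    have satv : saturated M v = false by apply/negbTE/negP => sv; move: (satM v sv); rewrite (negbTE vS').
    exists (v :: s), D, M; split; split; try exact: cD; try exact: mM.
    * by rewrite /= Us Ms vS'.
    * move=> y; rewrite in_cons Ms inS'; case: eqVneq => [->|] //=.
    * by apply: subset_trans DS _; apply: subsetDl.
    * move=> w sw; move: (satM w sw) => /andP[]; rewrite inS' => /andP[_ wS]; rewrite /tau' wS /=.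
      case: (eqVneq w u) => [->|wu]; rewrite ?eqxx ?(negbTE wu) //; by case: (tau u).
    * move: cM; rewrite /cost (sumD1 _ uS') (sumD1 _ uS') sum2 sum2 satv tv0.
      have -> : \sum_(i in S' :\ u) tau' i = \sum_(i in S' :\ u) tau i.
        by apply: eq_bigr => w /inS''[wu _ _]; rewrite /tau' (negbTE wu).
      have -> : \sum_(i in S' :\ u) (if saturated M i then degS S i else 0) =
                \sum_(i in S' :\ u) (if saturated M i then degS S' i else 0).
        by apply: eq_bigr => w /inS''[wu wv wS]; rewrite dSw // inS' wv.
      rewrite /tau' eqxx dSu.
      have su := satM u; rewrite /tau' eqxx uS' /= in su.
      exact: arB0 su.
    * move=> w wS wD; case: (eqVneq w v) => [->|wv]; first by rewrite tv0.
      have wS' : w \in S' by rewrite inS' wv.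
      case: (eqVneq w u) => [wu|wu].
        rewrite wu; have := oM u uS'; rewrite -wu wD /tau' wu eqxx => /(_ isT) h.
        have vs : v \notin s by rewrite Ms.
        have euv : e u v by rewrite esym.
        exact: arO h (card_pre_cons1 uv vs euv).
      have := oM w wS' wD; rewrite /tau' (negbTE wu) => h.
      exact: leq_trans h (card_pre_cons _ wv).
  +
    have usS : forall s : seq T, (forall x, (x \in s) = (x \in S')) -> u \in s by move=> s Ms; rewrite Ms.
    have memR : forall s : seq T, (forall x, (x \in s) = (x \in S')) ->
        forall y, (y \in rcons s v) = (y \in S).
      by move=> s Ms y; rewrite mem_rcons in_cons Ms inS'; case: eqVneq => [->|] //=.
    have uniqR : forall s : seq T, (forall x, (x \in s) = (x \in S')) -> uniq s -> uniq (rcons s v).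
      by move=> s Ms Us; rewrite rcons_uniq Ms vS' Us.
    case: (ltnP (tau u) (degS S u)) => [lt|ge].
    *
      have Ht' : forall w, w \in S' -> tau w <= degS S' w.
        move=> w wS'; case: (eqVneq w u) => [->|wu].
          by move: lt; rewrite dSu ltnS.
        by rewrite -dSw //; apply: Ht; move: wS'; rewrite inS' => /andP[].
      have [s [D [M [[Us Ms DS cD mM] [satM cM oM]]]]] := IH S' tau ltS' Ht'.
      have satv : saturated M v = false by apply/negbTE/negP => sv; move: (satM v sv); rewrite (negbTE vS').
      exists (rcons s v), D, M; split; split; try exact: cD; try exact: mM.
      - exact: uniqR.
      - exact: memR.
      - by apply: subset_trans DS _; apply: subsetDl.
      - move=> w sw; move: (satM w sw) => /andP[]; rewrite inS' => /andP[_ wS] tw; by rewrite wS tw.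
      - move: cM; rewrite /cost (sumD1 _ uS') (sumD1 _ uS') sum2 sum2 satv tv1'.
        have -> : \sum_(i in S' :\ u) (if saturated M i then degS S i else 0) =
                  \sum_(i in S' :\ u) (if saturated M i then degS S' i else 0).
          by apply: eq_bigr => w /inS''[wu wv wS]; rewrite dSw // inS' wv.
        rewrite dSu; exact: arB1.
      - move=> w wS wD; case: (eqVneq w v) => [->|wv].
          rewrite tv1'; apply: (card_pre_rcons_v (u := u)) => //; first by rewrite Ms.
          exact: usS.
        have wS' : w \in S' by rewrite inS' wv.
        apply: leq_trans (oM w wS' wD) _; apply: card_pre_rcons; by rewrite Ms.
    * (* u and v both demanding: u goes to D, uv to M *)
      have tu : tau u = degS S u by apply/eqP; rewrite eqn_leq ge Ht.
      pose tau' := fun w => if w == u then 0 else tau w.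
      have Ht' : forall w, w \in S' -> tau' w <= degS S' w.
        move=> w wS'; rewrite /tau'; case: (eqVneq w u) => [->|wu] //.
        by rewrite -dSw //; apply: Ht; move: wS'; rewrite inS' => /andP[].
      have [s [D [M [[Us Ms DS cD mM] [satM cM oM]]]]] := IH S' tau' ltS' Ht'.
      have satv : saturated M v = false by apply/negbTE/negP => sv; move: (satM v sv); rewrite (negbTE vS').
      have satu : saturated M u = false.
        by apply/negbTE/negP => su; move: (satM u su); rewrite /tau' eqxx andbF.
      have uvN : [set u; v] \notin M.
        apply/negP => uvM; move/negP: (negbT satu); apply; apply/exists_inP.
        by exists [set u; v]; rewrite // !inE eqxx.
      exists (rcons s v), (u |: D), ([set u; v] |: M); split; split.
      - exact: uniqR.
      - exact: memR.
      - by rewrite subUset sub1set uS (subset_trans DS) // subsetDl.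
      - by rewrite !cardsU1 uvN; apply: leq_add; [case: (u \notin D) | exact: cD].
      - exact: (matchingU mM (etrans (esym u v) evu) (negbT satu) (negbT satv)).
      - move=> w; rewrite satU => /or3P[/eqP->|/eqP->|sw].
        + by rewrite uS tu dSu.
        + by rewrite vS tv1'.
        + move: (satM w sw) => /andP[]; rewrite inS' /tau' => /andP[_ wS].
          by case: (eqVneq w u) => // _ tw; rewrite wS tw.
      - move: cM; rewrite /cost (sumD1 _ uS') (sumD1 _ uS') sum2 sum2 satu.
        rewrite !satU !eqxx /= !orbT /= tv1' -tu d1.
        have -> : \sum_(i in S' :\ u) tau' i = \sum_(i in S' :\ u) tau i.
          by apply: eq_bigr => w /inS''[wu _ _]; rewrite /tau' (negbTE wu).
        have -> : \sum_(i in S' :\ u) (if saturated ([set u; v] |: M) i then degS S i else 0) =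
                  \sum_(i in S' :\ u) (if saturated M i then degS S' i else 0).
          by apply: eq_bigr => w /inS''[wu wv wS]; rewrite satU (negbTE wu) (negbTE wv) /= dSw // inS' wv.
        by rewrite /tau' eqxx !add0n => h; rewrite leq_add2l leq_add2l.
      - move=> w wS; rewrite !inE negb_or => /andP[wu wD]; case: (eqVneq w v) => [->|wv].
          rewrite tv1'; apply: (card_pre_rcons_v (u := u)) => //; first by rewrite Ms.
          exact: usS.
        have wS' : w \in S' by rewrite inS' wv.
        have := oM w wS' wD; rewrite /tau' (negbTE wu) => h.
        apply: leq_trans h _; apply: card_pre_rcons; by rewrite Ms.
Qed.

Lemma act_mono tau (D : {set T}) i : activated e tau D i \subset activated e tau D i.+1.
Proof. by rewrite /=; apply: subsetUl. Qed.

Lemma act_mono' tau (D : {set T}) i j : i <= j -> activated e tau D i \subset activated e tau D j.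
Proof.
elim: j => [|j IH]; first by rewrite leqn0 => /eqP->.
rewrite leq_eqVlt => /orP[/eqP->//|]; rewrite ltnS => /IH h.
exact: subset_trans h (act_mono _ _ _).
Qed.

Lemma order_dynamo tau (D : {set T}) (s : seq T) : uniq s -> (forall x, x \in s) ->
  (forall v, v \notin D -> tau v <= #|nbhd e v :&: pre s v|) -> dynamo e tau D.
Proof.
move=> Us Ms Ho.
have claim : forall i, i <= size s -> [set u | index u s < i] \subset activated e tau D i.
  elim=> [|i IHi] lei; first by apply/subsetP => u; rewrite inE.
  apply/subsetP => u; rewrite inE ltnS leq_eqVlt => /orP[/eqP ui|ui]; last first.
    apply: (subsetP (act_mono tau D i)); apply: (subsetP (IHi (ltnW lei))); by rewrite inE.
  case: (boolP (u \in activated e tau D i)) => [uA|uA]; first exact: (subsetP (act_mono tau D i)).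
  have uD : u \notin D by apply: contra uA; apply: (subsetP (act_mono' tau D (leq0n i))).
  rewrite /= !inE (negbTE uA) /=.
  apply: leq_trans (Ho u uD) _; apply: subset_leq_card; apply: setIS.
  apply: subset_trans (IHi (ltnW lei)); apply/subsetP => w; by rewrite !inE ui.
have sz : size s = #|T|.
  apply/eqP; rewrite eqn_leq cardE; apply/andP; split.
    by apply: uniq_leq_size => // x _; rewrite mem_enum.
  by apply: uniq_leq_size (enum_uniq T) _ => x _; exact: Ms.
rewrite /dynamo; apply/existsP; exists ord_max; apply/eqP/setP => x; rewrite inE.
apply: (subsetP (claim #|T| _)); first by rewrite sz.
by rewrite inE -sz index_mem Ms.
Qed.

Lemma full_nbhd (C : {set T}) a b : e a b -> b \notin C -> #|nbhd e a :&: C| < deg e a.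
Proof.
move=> eab bC; rewrite /deg; apply: proper_card; rewrite properEneq subsetIl andbT.
apply/negP => /eqP h; have : b \in nbhd e a :&: C by rewrite h inE.
by rewrite inE (negbTE bC) andbF.
Qed.

Lemma act_avoid tau (D : {set T}) u v : e u v -> u \notin D -> v \notin D ->
  tau u = deg e u -> tau v = deg e v ->
  forall i, (u \notin activated e tau D i) && (v \notin activated e tau D i).
Proof.
move=> euv uD vD tu tv; elim=> [|i /andP[uA vA]] /=; first by rewrite uD vD.
rewrite !inE (negbTE uA) (negbTE vA) /= tu tv -!ltnNge (full_nbhd euv vA) /=.
apply: full_nbhd uA; by rewrite esym.
Qed.

Definition tauM (M : {set {set T}}) w := if saturated M w then deg e w else 0.

Lemma dyn_lb (M : {set {set T}}) (D : {set T}) : matching e M -> dynamo e (tauM M) D -> #|M| <= #|D|.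
Proof.
move=> mM /existsP[k /eqP Hk].
have meet : forall A, A \in M -> exists2 x, x \in A & x \in D.
  move=> A AM; have /existsP[u /existsP[v /andP[euv /eqP HA]]] := matching_edge mM AM.
  have satA : forall w, w \in A -> tauM M w = deg e w.
    by move=> w wA; rewrite /tauM; have -> : saturated M w by apply/exists_inP; exists A.
  case: (boolP (u \in D)) => [uD|uD]; first by exists u; rewrite // HA !inE eqxx.
  case: (boolP (v \in D)) => [vD|vD]; first by exists v; rewrite // HA !inE eqxx orbT.
  have uA : u \in A by rewrite HA !inE eqxx.
  have vA : v \in A by rewrite HA !inE eqxx orbT.
  have := act_avoid euv uD vD (satA u uA) (satA v vA) k.
  by rewrite Hk !inE.
pose h := fun x => odflt set0 [pick A in M | x \in A].
have sub : M \subset h @: D.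
  apply/subsetP => A AM; have [x xA xD] := meet A AM.
  apply/imsetP; exists x => //; rewrite /h; case: pickP => [B /andP[BM xB]|none] /=.
    apply/eqP; apply: contraT => AB; have := matching_disj mM AM BM AB.
    by move/disjointFr => /(_ x xA); rewrite xB.
  by move: (none A); rewrite AM xA.
exact: leq_trans (subset_leq_card sub) (leq_imset_card _ _).
Qed.

End G.

Lemma bigmin_le (I : finType) (P : pred I) (F : I -> nat) m j :
  P j -> \big[minn/m]_(i | P i) F i <= F j.
Proof.
move=> Pj; have : j \in index_enum I by rewrite mem_index_enum.
elim: (index_enum I) => [|a r IH] //; rewrite inE big_cons => /orP[/eqP<-|jr].
  by rewrite Pj geq_minl.
case: (P a); last exact: IH jr.
exact: leq_trans (geq_minr _ _) (IH jr).
Qed.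

Lemma le_bigmin (I : finType) (P : pred I) (F : I -> nat) m x :
  x <= m -> (forall i, P i -> x <= F i) -> x <= \big[minn/m]_(i | P i) F i.
Proof. by move=> xm H; elim/big_rec: _ => // i y Pi xy; rewrite leq_min H. Qed.

End Aux.
Import Aux.

Theorem proposition6 (R : realType) (T : finType) (e : rel T)
  (Hsimple : simple_graph e) (Hforest : forest e) (t : R) (ht : (0 < t)%R) :
  exists M : {set {set T}},
    matching e M /\
    let tau := fun w => if saturated M w then deg e w else 0 in
    (avg_threshold (T:=T) R tau <= t)%R /\
    Ldyn e t = dyn e tau /\ dyn e tau = #|M|.
Proof.
have [esym eirr] := Hsimple.
pose feas (M : {set {set T}}) :=
  matching e M && (avg_threshold (T:=T) R (tauM e M) <= t)%R.
have f0 : feas set0.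
  rewrite /feas matching0 /= /avg_threshold big1 ?mul0r; first exact: ltW.
  by move=> w _; rewrite /tauM sat0.
pose M := [arg max_(M > set0 | feas M) #|M|].
have [Mf Mmax] : feas M /\ (forall M', feas M' -> #|M'| <= #|M|).
  rewrite /M; case: arg_maxnP => // M1 fM1 HM1; split => // M' fM'; exact: HM1.
move/andP: (Mf) => [mM avgM].
exists M; split => //.
have lb : #|M| <= dyn e (tauM e M).
  apply: le_bigmin => [|D HD]; last exact: (@dyn_lb T e esym M D mM HD).
  have : dynamo e (tauM e M) setT by rewrite /dynamo; apply/existsP; exists ord0.
  by move/(@dyn_lb T e esym M setT mM); rewrite cardsT.
have ltT : forall v, tauM e M v < #|T|.
  move=> v; apply: (@leq_ltn_trans (deg e v)); first by rewrite /tauM; case: ifP.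
  rewrite /deg -cardsT; apply: proper_card; rewrite properT; apply/negP => /eqP h.
  have : v \in nbhd e v by rewrite h inE.
  by rewrite inE eirr.
pose sf : {ffun T -> 'I_#|T|} := [ffun v => Ordinal (ltT v)].
have Hs : (fun v => nat_of_ord (sf v)) = tauM e M.
  by apply: functional_extensionality => v; rewrite ffunE.
have mid : dyn e (tauM e M) <= Ldyn e t.
  rewrite /Ldyn -Hs.
  apply: (leq_bigmax_cond (F := fun s : {ffun T -> 'I_#|T|} => dyn e (fun v => nat_of_ord (s v)))).
  rewrite Hs avgM andbT; apply/forallP => v; rewrite /tauM; by case: ifP.
have ub : Ldyn e t <= #|M|.
  rewrite /Ldyn; apply/bigmax_leqP => s /andP[thr avg].
  have Ht : forall v, v \in [set: T] -> (fun v => nat_of_ord (s v)) v <= degS e setT v.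
    by move=> v _; rewrite /degS setIT; move/forallP: thr => /(_ v).
  have [sq [D [M' [[Us Ms _ cD mM'] [_ cM oM]]]]] := core esym eirr Hforest Ht.
  have HD : dynamo e (fun v => nat_of_ord (s v)) D.
    apply: (order_dynamo Us) => [x|v vD]; first by rewrite Ms in_setT.
    exact: oM v (in_setT v) vD.
  have dl : dyn e (fun v => nat_of_ord (s v)) <= #|D| by rewrite /dyn; apply: bigmin_le.
  apply: leq_trans dl _; apply: leq_trans cD _; apply: Mmax.
  rewrite /feas mM' /=; apply: le_trans avg; rewrite /avg_threshold; apply: ler_wpM2r.
    by rewrite invr_ge0 ler0n.
  rewrite ler_nat; apply: leq_trans (leq_trans _ cM) _.
    rewrite /cost /tauM leq_eqVlt; apply/orP; left; apply/eqP.
    by apply: eq_big => [w|w _]; rewrite ?in_setT // /degS setIT.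
  rewrite leq_eqVlt; apply/orP; left; apply/eqP.
  by apply: eq_bigl => w; rewrite in_setT.
change ((avg_threshold (T:=T) R (tauM e M) <= t)%R /\
   Ldyn e t = dyn e (tauM e M) /\ dyn e (tauM e M) = #|M|).
split => //; split; apply/eqP; rewrite eqn_leq.
  by rewrite mid (leq_trans ub lb).
by rewrite lb (leq_trans mid ub).
Qed.
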